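(* Let $K$ be a quasi-arithmetic self-similar compact set of ratio $\rho$ and module $\mu$, and put $T_u=K^{(u)}\setminus K^{(u+1)}$ for $u\ge0$. Let $n\in\mathbf{N}$, $p,q\in\mathbf{Z}$ and $v,w\in\mathbf{Z}_{\ge0}$ with $n/\rho^p\in T_v$ and $n/\rho^q\in T_w$. Then $p\mu-v=q\mu-w$.
   Context: For $A\subset\mathbf{R}$, $A'$ denotes the derived set, $A^{(0)}=A$, $A^{(n+1)}=(A^{(n)})'$. The reverse usual order is $x\preccurlyeq y$ iff $x\ge y$. A self-similar compact set of ratio $\rho>1$ and module $\mu\in\mathbf{N}$ is a compact set $K\subset[0,+\infty)$ with $\rho K^{(\mu)}=K$, well ordered by $\preccurlyeq$, of order type $\omega^\omega+1$. Such $K$ is called quasi-arithmetic if $\rho\ge2$ is a natural number and there is a function $\kappa\colon\mathbf{N}\setminus\rho\mathbf{N}\to\mathbf{Z}_{\ge0}$ with $K\setminus\{0\}=\{m/\rho^k: m\in\mathbf{N},\ \rho\nmid m,\ k\in\mathbf{Z},\ k\ge\kappa(m)\}$. *)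

(* Defs.v *)
From Stdlib Require Import Reals Lra Lia ZArith List.
From Stdlib Require Export Rtopology.
Open Scope R_scope.

Definition derived (A : R -> Prop) : R -> Prop :=
  fun x => forall eps : R, 0 < eps ->
    exists y, A y /\ y <> x /\ Rabs (y - x) < eps.

Fixpoint iter_derived (n : nat) (A : R -> Prop) : R -> Prop :=
  match n with
  | O => A
  | S k => derived (iter_derived k A)
  end.

(* Well-ordered by the reverse order x ≼ y iff x >= y:
   every nonempty subset of A has a ≼-least element (= its usual maximum). *)
Definition rev_well_ordered (A : R -> Prop) : Prop :=
  forall B : R -> Prop, (forall x, B x -> A x) -> (exists x, B x) ->
    exists m, B m /\ forall x, B x -> x <= m.

(* A concrete model of the ordinal omega^omega + 1:
   ordinals < omega^omega are Cantor normal forms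
   omega^a1 + ... + omega^ak with a1 >= ... >= ak (nonincreasing lists),
   compared lexicographically (a proper prefix is smaller);
   None stands for omega^omega itself (the top element). *)
Fixpoint nonincr (l : list nat) : Prop :=
  match l with
  | nil => True
  | a :: l' => match l' with
               | nil => True
               | b :: _ => (b <= a)%nat /\ nonincr l'
               end
  end.

Fixpoint lex_lt (l m : list nat) : Prop :=
  match l, m with
  | nil, nil => False
  | nil, _ :: _ => True
  | _ :: _, nil => False
  | a :: l', b :: m' => (a < b)%nat \/ (a = b /\ lex_lt l' m')
  end.

Definition ord_valid (o : option (list nat)) : Prop :=
  match o with None => True | Some l => nonincr l end.

Definition ord_lt (o o' : option (list nat)) : Prop :=
  match o, o' with
  | Some l, Some m => lex_lt l m
  | Some _, None => True
  | None, _ => False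
  end.

(* (A, ≼) has order type omega^omega + 1: there is an order isomorphism
   onto the model above, where x ≺ y iff x > y. *)
Definition order_type_omega_omega_plus_1 (A : R -> Prop) : Prop :=
  exists f : R -> option (list nat),
    (forall x, A x -> ord_valid (f x)) /\
    (forall o, ord_valid o -> exists x, A x /\ f x = o) /\
    (forall x y, A x -> A y -> (ord_lt (f x) (f y) <-> y < x)).

Definition self_similar (K : R -> Prop) (rho : R) (mu : nat) : Prop :=
  1 < rho /\ (1 <= mu)%nat /\
  compact K /\ (forall x, K x -> 0 <= x) /\
  (forall x, K x <-> exists y, iter_derived mu K y /\ x = rho * y) /\
  rev_well_ordered K /\
  order_type_omega_omega_plus_1 K.

Definition quasi_arithmetic (K : R -> Prop) (rho : R) (mu : nat) : Prop :=
  self_similar K rho mu /\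
  exists r : nat, (2 <= r)%nat /\ rho = INR r /\
  exists kappa : nat -> nat,
    forall x, (K x /\ x <> 0) <->
      exists (m : nat) (k : Z),
        (1 <= m)%nat /\ ~ (Nat.divide r m) /\ (Z.of_nat (kappa m) <= k)%Z /\
        x = INR m / powerRZ rho k.

Definition T_level (K : R -> Prop) (u : nat) : R -> Prop :=
  fun x => iter_derived u K x /\ ~ iter_derived (S u) K x.

(* Main.v *)
Require Import Defs.
From Stdlib Require Import Reals ZArith Lra Lia.
Open Scope R_scope.

Lemma derived_ext (A B : R -> Prop) : (forall x, A x -> B x) ->
  forall x, derived A x -> derived B x.
Proof.
  intros H x D eps He. destruct (D eps He) as [y [Ay [Hy Hl]]].
  exists y; auto.
Qed.

Lemma iter_ext (A B : R -> Prop) u : (forall x, A x -> B x) ->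
  forall x, iter_derived u A x -> iter_derived u B x.
Proof.
  induction u; simpl; intros H x; auto.
  apply derived_ext; auto.
Qed.

Lemma derived_scale (A : R -> Prop) c : 0 < c ->
  forall x, derived (fun y => A (c*y)) x <-> derived A (c*x).
Proof.
  intros Hc x; split; intros D eps He.
  - destruct (D (eps / c)) as [y [Ay [Hy Hl]]].
    { apply Rdiv_lt_0_compat; auto. }
    exists (c*y); split; auto; split.
    + intro E. apply Hy. apply Rmult_eq_reg_l with c; lra.
    + replace (c*y - c*x) with (c*(y-x)) by ring.
      rewrite Rabs_mult, (Rabs_right c) by lra.
      apply Rmult_lt_reg_r with (/c). apply Rinv_0_lt_compat; lra.
      replace (c * Rabs (y - x) * / c) with (Rabs (y-x)) by (field; lra).
      unfold Rdiv in Hl; lra.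
  - destruct (D (eps * c)) as [y [Ay [Hy Hl]]].
    { apply Rmult_lt_0_compat; auto. }
    exists (y / c); split.
    + replace (c * (y/c)) with y by (field; lra); auto.
    + split.
      * intro E. apply Hy. rewrite <- E. field; lra.
      * replace (y / c - x) with ((y - c*x) / c) by (field; lra).
        unfold Rdiv. rewrite Rabs_mult, Rabs_inv by lra.
        rewrite (Rabs_right c) by lra.
        apply Rmult_lt_reg_r with c; auto.
        replace (Rabs (y - c * x) * / c * c) with (Rabs (y - c*x)) by (field; lra).
        lra.
Qed.

Lemma iter_scale (A : R -> Prop) c u : 0 < c ->
  forall x, iter_derived u (fun y => A (c*y)) x <-> iter_derived u A (c*x).
Proof.
  intros Hc. induction u; simpl; intro x; [tauto|].
  split; intro H.
  - apply derived_scale; auto.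
    apply derived_ext with (A := iter_derived u (fun y => A (c*y))); auto.
    intros z; apply IHu.
  - apply derived_scale in H; auto.
    apply derived_ext with (A := fun y => iter_derived u A (c*y)); auto.
    intros z; apply IHu.
Qed.

Lemma iter_add (A : R -> Prop) a b :
  iter_derived (b + a) A = iter_derived b (iter_derived a A).
Proof. induction b; simpl; auto. rewrite IHb; auto. Qed.

Lemma closed_derived (A : R -> Prop) : closed_set A ->
  forall x, derived A x -> A x.
Proof.
  intros Hc x D. destruct (Classical_Prop.classic (A x)) as [|N]; auto.
  destruct (Hc x N) as [d Hd].
  destruct (D d (cond_pos d)) as [y [Ay [_ Hl]]].
  exfalso. apply (Hd y); auto.
Qed.

Lemma iter_decr (A : R -> Prop) : closed_set A ->
  forall k x, iter_derived (S k) A x -> iter_derived k A x.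
Proof.
  intros Hc k. induction k; simpl; intros x H.
  - apply closed_derived; auto.
  - apply derived_ext with (A := derived (iter_derived k A)); auto.
Qed.

Lemma iter_decr_le (A : R -> Prop) : closed_set A ->
  forall k m x, (k <= m)%nat -> iter_derived m A x -> iter_derived k A x.
Proof.
  intros Hc k m x Hle. induction Hle; auto.
  intro H; apply IHHle, iter_decr; auto.
Qed.

Lemma T_disjoint K a b x : closed_set K ->
  T_level K a x -> T_level K b x -> a = b.
Proof.
  intros Hc [Ha Na] [Hb Nb].
  destruct (Nat.lt_trichotomy a b) as [L|[E|L]]; auto; exfalso.
  - apply Na. apply iter_decr_le with b; auto.
  - apply Nb. apply iter_decr_le with a; auto.
Qed.

Lemma T_shift K rho mu : self_similar K rho mu ->
  forall d u y, T_level K u (rho ^ d * y) -> T_level K (u + d*mu) y.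
Proof.
  intros [Hr [_ [_ [_ [Hs _]]]]].
  assert (Hm : forall y, iter_derived mu K y <-> K (rho * y)).
  { intro y. split; [intro; apply Hs; exists y; auto|].
    intro H0; destruct (proj1 (Hs _) H0) as [z [Hz E]]. replace y with z; auto.
    apply Rmult_eq_reg_l with rho; lra. }
  assert (Hstep : forall u y, iter_derived (u + mu) K y <-> iter_derived u K (rho*y)).
  { intros u y. rewrite iter_add. rewrite <- iter_scale by lra.
    split; apply iter_ext; intros z; apply Hm. }
  induction d; intros u y H.
  - simpl in *. rewrite Nat.add_0_r. rewrite Rmult_1_l in H. auto.
  - simpl in H. replace (rho * rho ^ d * y) with (rho ^ d * (rho * y)) in H by ring.
    apply IHd in H.
    replace (u + S d * mu)%nat with ((u + d*mu) + mu)%nat by lia.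
    destruct H as [H1 H2]. split.
    + apply Hstep; auto.
    + intro H3. apply H2. change (iter_derived (S (u + d*mu) + mu) K y) in H3.
      apply Hstep in H3. exact H3.
Qed.

Lemma main_le (K : R -> Prop) (rho : R) (mu : nat) :
  self_similar K rho mu ->
  forall (n : nat) (p q : Z) (v w : nat), (p <= q)%Z ->
    T_level K v (INR n / powerRZ rho p) ->
    T_level K w (INR n / powerRZ rho q) ->
    (p * Z.of_nat mu - Z.of_nat v = q * Z.of_nat mu - Z.of_nat w)%Z.
Proof.
  intros Hs n p q v w Hpq Hv Hw.
  pose proof Hs as [Hr [_ [Hc _]]].
  set (d := Z.to_nat (q - p)).
  assert (Hq : q = (p + Z.of_nat d)%Z) by (unfold d; lia).
  assert (E : INR n / powerRZ rho p = rho ^ d * (INR n / powerRZ rho q)).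
  { rewrite Hq, powerRZ_add by lra. rewrite <- pow_powerRZ.
    assert (0 < powerRZ rho p) by (apply powerRZ_lt; lra).
    assert (0 < rho ^ d) by (apply pow_lt; lra).
    field; lra. }
  rewrite E in Hv. apply (T_shift K rho mu Hs) in Hv.
  pose proof (T_disjoint K _ _ _ (compact_P2 K Hc) Hv Hw). lia.
Qed.

Theorem mainTheorem5 (K : R -> Prop) (rho : R) (mu : nat) :
  quasi_arithmetic K rho mu ->
  forall (n : nat) (p q : Z) (v w : nat),
    (1 <= n)%nat ->
    T_level K v (INR n / powerRZ rho p) ->
    T_level K w (INR n / powerRZ rho q) ->
    (p * Z.of_nat mu - Z.of_nat v = q * Z.of_nat mu - Z.of_nat w)%Z.
Proof.
  intros [Hs _] n p q v w _ Hv Hw.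
  destruct (Z.le_gt_cases p q).
  - eapply main_le; eauto.
  - symmetry. eapply main_le; eauto. lia.
Qed.
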